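(* Consider the system \[ \begin{aligned} \dot S_h(t)&=\beta_h-C_{vh}\frac{I_v(t)}{N_v(t)}S_h(t)-\mu_hS_h(t),\\ \dot I_h(t)&=C_{vh}\frac{I_v(t-\tau)}{N_v(t-\tau)}S_h(t-\tau)-\mu_hI_h(t),\\ \dot S_v(t)&=\beta_v-C_{hv}I_h(t)S_v(t)-\mu_vS_v(t),\\ \dot I_v(t)&=C_{hv}I_h(t)S_v(t)-\mu_vI_v(t), \end{aligned} \] with $N_v=S_v+I_v$ and positive parameters $\beta_h,\beta_v,\mu_h,\mu_v,C_{vh},C_{hv}$, on the phase space $C_+$. Let $E^0=(\beta_h/\mu_h,0,\beta_v/\mu_v,0)^T$ and $R_0=\sqrt{C_{vh}C_{hv}\beta_h/(\mu_h^2\mu_v)}$. Then for any $\tau\ge0$, $E^0$ is globally asymptotically stable in $C_+$ if $R_0<1$, and globally attractive in $C_+$ if $R_0=1$.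
   Context: $C_+=\{\varphi\in C([-\tau,0],\mathbb{R}_+^4):\varphi_3(\theta)+\varphi_4(\theta)>0\ \forall\theta\in[-\tau,0]\}$ with the sup-norm; the constant function $E^0$ is regarded as an element of $C_+$. Globally attractive means every solution with initial function in $C_+$ converges to $E^0$; globally asymptotically stable means locally (Lyapunov) stable and globally attractive. *)

(* Defs.v *)
From Stdlib Require Import Reals.
From Coquelicot Require Import Coquelicot.
Open Scope R_scope.

Record traj := mkTraj { Sh : R -> R; Ih : R -> R; Sv : R -> R; Iv : R -> R }.

Definition cont_on_interval (a b : R) (f : R -> R) : Prop :=
  forall t, a <= t <= b ->
    filterlim f (within (fun u => a <= u <= b) (locally t)) (locally (f t)).

Definition cont_on_from (a : R) (f : R -> R) : Prop :=
  forall t, a <= t ->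
    filterlim f (within (fun u => a <= u) (locally t)) (locally (f t)).

Definition in_Cplus (tau : R) (phi : traj) : Prop :=
  cont_on_interval (- tau) 0 (Sh phi) /\ cont_on_interval (- tau) 0 (Ih phi) /\
  cont_on_interval (- tau) 0 (Sv phi) /\ cont_on_interval (- tau) 0 (Iv phi) /\
  (forall th, - tau <= th <= 0 ->
     0 <= Sh phi th /\ 0 <= Ih phi th /\ 0 <= Sv phi th /\ 0 <= Iv phi th /\
     0 < Sv phi th + Iv phi th).

Definition is_solution (bh bv muh muv Cvh Chv tau : R) (phi x : traj) : Prop :=
  (forall th, - tau <= th <= 0 ->
     Sh x th = Sh phi th /\ Ih x th = Ih phi th /\
     Sv x th = Sv phi th /\ Iv x th = Iv phi th) /\
  cont_on_from (- tau) (Sh x) /\ cont_on_from (- tau) (Ih x) /\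
  cont_on_from (- tau) (Sv x) /\ cont_on_from (- tau) (Iv x) /\
  (forall t, 0 < t ->
     is_derive (Sh x) t
       (bh - Cvh * (Iv x t / (Sv x t + Iv x t)) * Sh x t - muh * Sh x t) /\
     is_derive (Ih x) t
       (Cvh * (Iv x (t - tau) / (Sv x (t - tau) + Iv x (t - tau))) * Sh x (t - tau)
        - muh * Ih x t) /\
     is_derive (Sv x) t (bv - Chv * Ih x t * Sv x t - muv * Sv x t) /\
     is_derive (Iv x) t (Chv * Ih x t * Sv x t - muv * Iv x t)).

Definition close_at (x : traj) (e1 e2 e3 e4 eps t : R) : Prop :=
  Rabs (Sh x t - e1) < eps /\ Rabs (Ih x t - e2) < eps /\
  Rabs (Sv x t - e3) < eps /\ Rabs (Iv x t - e4) < eps.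

(* Lyapunov stability of the constant function E in C_+ (sup-norm on C). *)
Definition lyap_stable (bh bv muh muv Cvh Chv tau e1 e2 e3 e4 : R) : Prop :=
  forall eps, 0 < eps -> exists delta, 0 < delta /\
    forall phi x, in_Cplus tau phi ->
      (forall th, - tau <= th <= 0 -> close_at phi e1 e2 e3 e4 delta th) ->
      is_solution bh bv muh muv Cvh Chv tau phi x ->
      forall t, - tau <= t -> close_at x e1 e2 e3 e4 eps t.

Definition glob_attractive (bh bv muh muv Cvh Chv tau e1 e2 e3 e4 : R) : Prop :=
  forall phi x, in_Cplus tau phi ->
    is_solution bh bv muh muv Cvh Chv tau phi x ->
    is_lim (Sh x) p_infty e1 /\ is_lim (Ih x) p_infty e2 /\
    is_lim (Sv x) p_infty e3 /\ is_lim (Iv x) p_infty e4.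

Definition glob_asym_stable (bh bv muh muv Cvh Chv tau e1 e2 e3 e4 : R) : Prop :=
  lyap_stable bh bv muh muv Cvh Chv tau e1 e2 e3 e4 /\
  glob_attractive bh bv muh muv Cvh Chv tau e1 e2 e3 e4.

(* Main.v *)
Require Import Defs.
From Stdlib Require Import Reals Lra Psatz Classical.
From Coquelicot Require Import Coquelicot.
Open Scope R_scope.

Definition cw (a : R) (f : R -> R) (t : R) : Prop :=
  forall eps, 0 < eps -> exists del, 0 < del /\
    forall u, a <= u -> Rabs (u - t) < del -> Rabs (f u - f t) < eps.

Lemma cw_of_cont b a f t : cont_on_from b f -> b <= a -> a <= t -> cw a f t.
Proof.
  intros H hba hat eps heps.
  specialize (H t ltac:(lra)).
  assert (HP: locally (f t) (fun y => Rabs (y - f t) < eps)).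
  { exists (mkposreal eps heps). intros y Hy. exact Hy. }
  specialize (H _ HP). destruct H as [d Hd].
  exists d. split. apply cond_pos. intros u hu hd. apply Hd. exact hd. lra.
Qed.

Lemma cw_plus a f g t : cw a f t -> cw a g t -> cw a (fun u => f u + g u) t.
Proof.
  intros Hf Hg eps heps.
  destruct (Hf (eps/2) ltac:(lra)) as [d1 [hd1 H1]].
  destruct (Hg (eps/2) ltac:(lra)) as [d2 [hd2 H2]].
  exists (Rmin d1 d2). split. apply Rmin_pos; lra.
  intros u hu hd.
  assert (A1 := H1 u hu ltac:(pose proof (Rmin_l d1 d2); lra)).
  assert (A2 := H2 u hu ltac:(pose proof (Rmin_r d1 d2); lra)).
  replace (f u + g u - (f t + g t)) with ((f u - f t) + (g u - g t)) by ring.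
  pose proof (Rabs_triang (f u - f t) (g u - g t)). lra.
Qed.

Lemma cw_scal a f c t : cw a f t -> cw a (fun u => c * f u) t.
Proof.
  intros Hf eps heps.
  destruct (Hf (eps / (Rabs c + 1))) as [d [hd H]].
  { apply Rdiv_lt_0_compat; pose proof (Rabs_pos c); lra. }
  exists d. split; auto. intros u hu hdu.
  replace (c * f u - c * f t) with (c * (f u - f t)) by ring.
  rewrite Rabs_mult. specialize (H u hu hdu).
  pose proof (Rabs_pos c). pose proof (Rabs_pos (f u - f t)).
  assert (Rabs (f u - f t) * (Rabs c + 1) < eps).
  { apply (Rmult_lt_compat_r (Rabs c + 1)) in H; [|lra].
    unfold Rdiv in H. rewrite Rmult_assoc, Rinv_l in H; lra. }
  nra.
Qed.

Lemma cw_const a c t : cw a (fun _ => c) t.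
Proof. intros eps heps. exists 1. split. lra. intros. rewrite Rminus_eq_0, Rabs_R0. lra. Qed.

Lemma cw_cont a f t : continuity_pt f t -> cw a f t.
Proof.
  intros H eps heps. destruct (H eps heps) as [d [hd Hd]].
  exists d. split; auto. intros u hu hdu.
  destruct (Req_dec u t) as [->|hne].
  - rewrite Rminus_eq_0, Rabs_R0; lra.
  - apply (Hd u). split. split. easy. auto. exact hdu.
Qed.

Lemma Rmax_dist a x c : Rabs (Rmax a x - Rmax a c) <= Rabs (x - c).
Proof.
  unfold Rmax. destruct (Rle_dec a x); destruct (Rle_dec a c);
  unfold Rabs; repeat destruct Rcase_abs; lra.
Qed.

Lemma cw_bounded a b f : (forall t, a <= t -> cw a f t) -> a <= b ->
  exists K, 0 <= K /\ forall t, a <= t <= b -> Rabs (f t) <= K.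
Proof.
  intros H hab.
  set (F := fun u => f (Rmax a u)).
  assert (HF : forall c, continuity_pt F c).
  { intros c eps heps. destruct (H (Rmax a c) (Rmax_l _ _) eps heps) as [d [hd Hd]].
    exists d. split; auto. intros x [_ hx]. simpl in hx |- *. unfold R_dist in *.
    unfold F. apply Hd. apply Rmax_l. pose proof (Rmax_dist a x c). lra. }
  destruct (continuity_ab_maj F a b hab (fun c _ => HF c)) as [M [HM _]].
  destruct (continuity_ab_min F a b hab (fun c _ => HF c)) as [m [Hm _]].
  exists (Rabs (F M) + Rabs (F m)). split. pose proof (Rabs_pos (F M)); pose proof (Rabs_pos (F m)); lra.
  intros t ht. specialize (HM t ht). specialize (Hm t ht).
  unfold F in HM, Hm. rewrite (Rmax_right a t) in HM, Hm by lra. fold F in HM, Hm.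
  pose proof (Rle_abs (F M)) as X1; pose proof (Rle_abs (-(F m))) as X2; rewrite Rabs_Ropp in X2;
  pose proof (Rabs_pos (F M)); pose proof (Rabs_pos (F m)); unfold F in *.
  apply Rabs_le. lra.
Qed.

Lemma deriv_pos_left g s d a : is_derive g s d -> 0 < d -> a < s ->
  exists u, a <= u < s /\ g u < g s.
Proof.
  intros Hd hd has. apply is_derive_Reals in Hd.
  destruct (Hd d hd) as [del Hdel].
  set (h := - Rmin (del/2) (s - a)).
  assert (hpos : 0 < Rmin (del/2) (s-a)) by (apply Rmin_pos; pose proof (cond_pos del); lra).
  assert (hh : h <> 0) by (unfold h; lra).
  assert (hle : Rabs h < del).
  { unfold h. rewrite Rabs_Ropp, Rabs_pos_eq by lra. pose proof (Rmin_l (del/2) (s-a)). pose proof (cond_pos del). lra. }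
  specialize (Hdel h hh hle).
  exists (s + h). split.
  - unfold h. pose proof (Rmin_r (del/2) (s-a)). lra.
  - assert (q : 0 < (g (s + h) - g s) / h).
    { apply Rabs_def2 in Hdel. lra. }
    assert (hneg : h < 0) by (unfold h; lra).
    assert (g (s+h) - g s = (g (s + h) - g s) / h * h) by (field; lra).
    nra.
Qed.


Definition allpos (g1 g2 g3 g4 : R -> R) (u : R) := 0 < g1 u /\ 0 < g2 u /\ 0 < g3 u /\ 0 < g4 u.
Definition allnn (g1 g2 g3 g4 : R -> R) (u : R) := 0 <= g1 u /\ 0 <= g2 u /\ 0 <= g3 u /\ 0 <= g4 u.
Definition dpos (g : R -> R) (s : R) := g s = 0 -> exists d, is_derive g s d /\ 0 < d.

Lemma cw_neg_near a g s : cw a g s -> g s < 0 -> a < s -> exists v, a <= v < s /\ g v < 0.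
Proof.
  intros H hg has. destruct (H (- g s) ltac:(lra)) as [d [hd Hd]].
  set (v := Rmax a (s - d/2)). exists v.
  assert (a <= v) by apply Rmax_l.
  assert (v < s) by (unfold v; unfold Rmax; destruct Rle_dec; lra).
  assert (Rabs (v - s) < d).
  { unfold v, Rmax; destruct Rle_dec; rewrite Rabs_left; lra. }
  specialize (Hd v ltac:(lra) H2). apply Rabs_def2 in Hd. lra.
Qed.

Lemma barrier4 (a b : R) (g1 g2 g3 g4 : R -> R) :
  (forall t, a <= t -> cw a g1 t) -> (forall t, a <= t -> cw a g2 t) ->
  (forall t, a <= t -> cw a g3 t) -> (forall t, a <= t -> cw a g4 t) ->
  allpos g1 g2 g3 g4 a ->
  (forall s, a < s <= b -> (forall u, a <= u <= s -> allnn g1 g2 g3 g4 u) ->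
     dpos g1 s /\ dpos g2 s /\ dpos g3 s /\ dpos g4 s) ->
  forall t, a <= t <= b -> allpos g1 g2 g3 g4 t.
Proof.
  intros C1 C2 C3 C4 Ha HD t ht.
  destruct (classic (allpos g1 g2 g3 g4 t)) as [ok|nok]; [exact ok|exfalso].
  set (E := fun u => a <= u <= t /\ forall v, a <= v <= u -> allpos g1 g2 g3 g4 v).
  assert (Eb : bound E) by (exists t; intros u [hu _]; lra).
  assert (Ea : exists x, E x).
  { exists a. split. lra. intros v hv. replace v with a by lra. exact Ha. }
  destruct (completeness E Eb Ea) as [s [Hub Hlub]].
  assert (has : a <= s) by (apply Hub; destruct Ea as [x Hx]; split; [lra|]; intros v hv; replace v with a by lra; exact Ha).
  assert (hst : s <= t) by (apply Hlub; intros u [hu _]; lra).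
  assert (H1 : forall v, a <= v < s -> allpos g1 g2 g3 g4 v).
  { intros v hv. apply NNPP. intro hn.
    assert (is_upper_bound E v).
    { intros u [hu Hu]. destruct (Rle_dec v u) as [hvu|hvu].
      - exfalso. apply hn. apply Hu. lra.
      - lra. }
    specialize (Hlub v H). lra. }
  assert (H2 : allnn g1 g2 g3 g4 s).
  { destruct (Req_dec s a) as [hsa|hsa].
    - rewrite hsa. destruct Ha as [? [? [? ?]]]. repeat split; lra.
    - assert (has' : a < s) by lra.
      repeat split; apply Rnot_lt_le; intro hlt.
      + destruct (cw_neg_near a g1 s (C1 s has) hlt has') as [v [hv hgv]]. destruct (H1 v hv). lra.
      + destruct (cw_neg_near a g2 s (C2 s has) hlt has') as [v [hv hgv]]. destruct (H1 v hv) as [? [? ?]]. lra.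
      + destruct (cw_neg_near a g3 s (C3 s has) hlt has') as [v [hv hgv]]. destruct (H1 v hv) as [? [? [? ?]]]. lra.
      + destruct (cw_neg_near a g4 s (C4 s has) hlt has') as [v [hv hgv]]. destruct (H1 v hv) as [? [? [? ?]]]. lra. }
  assert (H3 : ~ allpos g1 g2 g3 g4 s).
  { intro hp. destruct (Req_dec s t) as [hs|hs]. { subst s. contradiction. }
    destruct hp as [p1 [p2 [p3 p4]]].
    destruct (C1 s has _ p1) as [d1 [hd1 D1]].
    destruct (C2 s has _ p2) as [d2 [hd2 D2]].
    destruct (C3 s has _ p3) as [d3 [hd3 D3]].
    destruct (C4 s has _ p4) as [d4 [hd4 D4]].
    set (d := Rmin (Rmin d1 d2) (Rmin d3 d4)).
    assert (hd : 0 < d) by (unfold d; repeat apply Rmin_pos; lra).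
    assert (dd1 : d <= d1) by (unfold d; pose proof (Rmin_l (Rmin d1 d2) (Rmin d3 d4)); pose proof (Rmin_l d1 d2); lra).
    assert (dd2 : d <= d2) by (unfold d; pose proof (Rmin_l (Rmin d1 d2) (Rmin d3 d4)); pose proof (Rmin_r d1 d2); lra).
    assert (dd3 : d <= d3) by (unfold d; pose proof (Rmin_r (Rmin d1 d2) (Rmin d3 d4)); pose proof (Rmin_l d3 d4); lra).
    assert (dd4 : d <= d4) by (unfold d; pose proof (Rmin_r (Rmin d1 d2) (Rmin d3 d4)); pose proof (Rmin_r d3 d4); lra).
    set (u := Rmin t (s + d/2)).
    assert (hu1 : s < u) by (unfold u, Rmin; destruct Rle_dec; lra).
    assert (hu2 : u <= t) by apply Rmin_l.
    assert (hu3 : u <= s + d/2) by apply Rmin_r.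
    assert (E u).
    { split. lra. intros v hv. destruct (Rlt_dec v s) as [hvs|hvs]. apply H1; lra.
      assert (Rabs (v - s) < d) by (rewrite Rabs_pos_eq; lra).
      specialize (D1 v ltac:(lra) ltac:(lra)). specialize (D2 v ltac:(lra) ltac:(lra)).
      specialize (D3 v ltac:(lra) ltac:(lra)). specialize (D4 v ltac:(lra) ltac:(lra)).
      apply Rabs_def2 in D1, D2, D3, D4. repeat split; lra. }
    specialize (Hub u H). lra. }
  assert (Hnn : forall u, a <= u <= s -> allnn g1 g2 g3 g4 u).
  { intros u hu. destruct (Req_dec u s) as [->|hus]. exact H2.
    destruct (H1 u ltac:(lra)) as [? [? [? ?]]]. repeat split; lra. }
  assert (has' : a < s).
  { destruct (Req_dec s a) as [e|e]; [|lra]. exfalso. apply H3. rewrite e. exact Ha. }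
  destruct (HD s ltac:(lra) Hnn) as [P1 [P2 [P3 P4]]].
  destruct Ha as [a1 [a2 [a3 a4]]].
  destruct H2 as [n1 [n2 [n3 n4]]].
  assert (key : forall g, dpos g s -> 0 <= g s -> g s <= 0 -> (forall v, a <= v < s -> 0 < g v) -> False).
  { intros g P n m Hv. assert (g s = 0) by lra. destruct (P H) as [dd [Hd hdd]].
    destruct (deriv_pos_left g s dd a Hd hdd has') as [v [hv hgv]]. specialize (Hv v hv). lra. }
  unfold allpos in H3.
  destruct (Rle_dec (g1 s) 0) as [q1|q1]. { apply (key g1 P1 n1 q1). intros v hv; apply (H1 v hv). }
  destruct (Rle_dec (g2 s) 0) as [q2|q2]. { apply (key g2 P2 n2 q2). intros v hv; apply (H1 v hv). }
  destruct (Rle_dec (g3 s) 0) as [q3|q3]. { apply (key g3 P3 n3 q3). intros v hv; apply (H1 v hv). }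
  destruct (Rle_dec (g4 s) 0) as [q4|q4]. { apply (key g4 P4 n4 q4). intros v hv; apply (H1 v hv). }
  apply H3. repeat split; lra.
Qed.


Lemma is_derive_comb (h f : R -> R) s dh df c : is_derive h s dh -> is_derive f s df ->
  is_derive (fun u => c + h u - f u) s (dh - df).
Proof.
  intros Hh Hf.
  assert (H := is_derive_minus (fun u => c + h u) f s (0 + dh) df).
  replace (dh - df) with (minus (0 + dh) df) by (unfold minus, plus, opp; simpl; ring).
  apply H; [|exact Hf].
  apply (is_derive_plus (fun _ => c) h s 0 dh); [exact (@is_derive_const R_AbsRing R_NormedModule c s)|exact Hh].
Qed.

Lemma cw_opp a f t : cw a f t -> cw a (fun u => - f u) t.
Proof.
  intros Hf. assert (H := cw_scal a f (-1) t Hf).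
  intros e he. destruct (H e he) as [d [hd Hd]]. exists d. split; auto.
  intros u hu hdu. specialize (Hd u hu hdu). replace (- f u - - f t) with (-1 * f u - -1 * f t) by ring. exact Hd.
Qed.

Lemma barrier1 a b g : (forall t, a <= t -> cw a g t) -> 0 < g a ->
  (forall s, a < s <= b -> (forall u, a <= u <= s -> 0 <= g u) -> dpos g s) ->
  forall t, a <= t <= b -> 0 < g t.
Proof.
  intros C Ha HD t ht.
  assert (H := barrier4 a b g g g g C C C C ltac:(repeat split; exact Ha)).
  refine (proj1 (H _ t ht)).
  intros s hs Hn. assert (P := HD s hs (fun u hu => proj1 (Hn u hu))). repeat split; exact P.
Qed.

Lemma cmp_upper a f c k :
  0 < k -> (forall t, a <= t -> cw a f t) ->
  (forall t, a < t -> exists d : R, is_derive f t d /\ d <= c - k * f t) ->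
  forall eta, 0 < eta -> forall t, a <= t ->
  f t < c / k + Rmax 0 (f a - c / k) * exp (- k * (t - a)) + eta.
Proof.
  intros hk C HD eta heta t ht.
  set (D := Rmax 0 (f a - c / k)).
  set (g := fun u => (c / k + eta) + D * exp (- k * (u - a)) - f u).
  assert (Hg : forall u, a <= u <= t -> 0 < g u).
  { apply barrier1.
    - intros u hu. unfold g. apply cw_plus. apply cw_plus. apply cw_const.
      apply cw_cont. reg.
      apply (cw_opp a f u (C u hu)).
    - unfold g. replace (- k * (a - a)) with 0 by ring. rewrite exp_0.
      unfold D. pose proof (Rmax_r 0 (f a - c/k)). lra.
    - intros s hs Hn Hz. destruct (HD s ltac:(lra)) as [d [Hd hd]].
      exists (D * (- k * exp (- k * (s - a))) - d). split.
      + unfold g. apply is_derive_comb; [|exact Hd]. auto_derive. all: try easy. unfold Rminus. ring.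
      + unfold g in Hz. assert (0 <= D) by (unfold D; apply Rmax_l).
        pose proof (exp_pos (- k * (s - a))).
        assert (E1 : f s = c / k + eta + D * exp (- k * (s - a))) by lra.
        assert (E2 : k * (c / k) = c) by (field; lra).
        rewrite E1 in hd.
        assert (E3 : c - k * (c / k + eta + D * exp (- k * (s - a))) = - (k * eta) - k * (D * exp (- k * (s - a)))) by (field; lra).
        assert (E4 : D * (- k * exp (- k * (s - a))) = - (k * (D * exp (- k * (s - a))))) by ring.
        pose proof (Rmult_lt_0_compat k eta hk heta). lra. }
  specialize (Hg t ltac:(lra)). unfold g in Hg. lra.
Qed.

Lemma cmp_upper_glob a f c k :
  0 < k -> (forall t, a <= t -> cw a f t) ->
  (forall t, a < t -> exists d : R, is_derive f t d /\ d <= c - k * f t) ->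
  forall t, a <= t -> f t <= c / k + Rmax 0 (f a - c / k).
Proof.
  intros hk C HD t ht. apply Rnot_lt_le. intro hlt.
  set (eta := (f t - (c / k + Rmax 0 (f a - c / k))) / 2).
  assert (heta : 0 < eta) by (unfold eta; lra).
  pose proof (cmp_upper a f c k hk C HD eta heta t ht).
  assert (exp (- k * (t - a)) <= 1).
  { rewrite <- exp_0. destruct (Req_dec t a). subst. right. f_equal. ring.
    left. apply exp_increasing. nra. }
  pose proof (Rmax_l 0 (f a - c / k)).
  assert (Rmax 0 (f a - c / k) * exp (- k * (t - a)) <= Rmax 0 (f a - c / k)) by nra.
  unfold eta in *. lra.
Qed.

Lemma ev_upper a f c k :
  0 < k -> (forall t, a <= t -> cw a f t) ->
  (forall t, a < t -> exists d : R, is_derive f t d /\ d <= c - k * f t) ->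
  forall eta, 0 < eta -> exists T, forall t, T <= t -> f t <= c / k + eta.
Proof.
  intros hk C HD eta heta.
  set (D := Rmax 0 (f a - c / k)).
  assert (hD : 0 <= D) by (unfold D; apply Rmax_l).
  exists (a + 2 * D / (k * eta)). intros t ht.
  assert (h0 : 0 <= 2 * D / (k * eta)) by (apply Rmult_le_pos; [lra| left; apply Rinv_0_lt_compat; nra]).
  pose proof (cmp_upper a f c k hk C HD (eta/2) ltac:(lra) t ltac:(lra)).
  fold D in H.
  assert (HE : D * exp (- k * (t - a)) <= eta / 2).
  { replace (- k * (t - a)) with (- (k * (t - a))) by ring. rewrite exp_Ropp.
    pose proof (exp_ineq1_le (k * (t - a))).
    pose proof (exp_pos (k * (t - a))).
    assert (k * (t - a) >= 2 * D / eta).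
    { assert (t - a >= 2 * D / (k * eta)) by lra.
      replace (2 * D / eta) with (k * (2 * D / (k * eta))) by (field; lra). nra. }
    assert (D <= eta / 2 * exp (k * (t - a))).
    { assert (eta / 2 * (2 * D / eta) = D) by (field; lra). nra. }
    apply (Rmult_le_reg_r (exp (k * (t - a)))); auto.
    rewrite Rmult_assoc, Rinv_l by lra. lra. }
  lra.
Qed.

Lemma neg_hyp a f c k :
  (forall t, a <= t -> cw a f t) ->
  (forall t, a < t -> exists d : R, is_derive f t d /\ c - k * f t <= d) ->
  (forall t, a <= t -> cw a (fun u => - f u) t) /\
  (forall t, a < t -> exists d : R, is_derive (fun u => - f u) t d /\ d <= - c - k * (- f t)).
Proof.
  intros C HD. split.
  - intros t ht. apply cw_opp, C, ht.
  - intros t ht. destruct (HD t ht) as [d [Hd hd]]. exists (- d). split.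
    + apply (is_derive_opp f t d Hd).
    + lra.
Qed.

Lemma ev_lower a f c k :
  0 < k -> (forall t, a <= t -> cw a f t) ->
  (forall t, a < t -> exists d : R, is_derive f t d /\ c - k * f t <= d) ->
  forall eta, 0 < eta -> exists T, forall t, T <= t -> c / k - eta <= f t.
Proof.
  intros hk C HD eta heta. destruct (neg_hyp a f c k C HD) as [C' HD'].
  destruct (ev_upper a _ _ k hk C' HD' eta heta) as [T HT]. exists T. intros t ht.
  specialize (HT t ht). replace (- c / k) with (- (c / k)) in HT by (field; lra). lra.
Qed.

Lemma cmp_lower_glob a f c k :
  0 < k -> (forall t, a <= t -> cw a f t) ->
  (forall t, a < t -> exists d : R, is_derive f t d /\ c - k * f t <= d) ->
  forall t, a <= t -> Rmin (f a) (c / k) <= f t.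
Proof.
  intros hk C HD t ht. destruct (neg_hyp a f c k C HD) as [C' HD'].
  pose proof (cmp_upper_glob a _ _ k hk C' HD' t ht). simpl in H.
  replace (- c / k) with (- (c / k)) in H by (field; lra).
  unfold Rmin, Rmax in *. destruct Rle_dec; destruct Rle_dec; lra.
Qed.


Definition setting (bh bv muh muv Cvh Chv tau : R) (phi x : traj) : Prop :=
  0 < bh /\ 0 < bv /\ 0 < muh /\ 0 < muv /\ 0 < Cvh /\ 0 < Chv /\ 0 <= tau /\
  in_Cplus tau phi /\ is_solution bh bv muh muv Cvh Chv tau phi x.

Definition Nv (x : traj) t := Sv x t + Iv x t.


Lemma set_init bh bv muh muv Cvh Chv tau phi x :
  setting bh bv muh muv Cvh Chv tau phi x -> forall th, - tau <= th <= 0 ->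
  0 <= Sh x th /\ 0 <= Ih x th /\ 0 <= Sv x th /\ 0 <= Iv x th /\ 0 < Nv x th.
Proof.
  intros (_&_&_&_&_&_&_&[_ [_ [_ [_ Hp]]]]&[He _]) th hth.
  destruct (He th hth) as [e1 [e2 [e3 e4]]]. unfold Nv. rewrite e1, e2, e3, e4. apply Hp, hth.
Qed.

Lemma set_cw bh bv muh muv Cvh Chv tau phi x :
  setting bh bv muh muv Cvh Chv tau phi x -> forall a t, - tau <= a -> a <= t ->
  cw a (Sh x) t /\ cw a (Ih x) t /\ cw a (Sv x) t /\ cw a (Iv x) t /\ cw a (Nv x) t.
Proof.
  intros (_&_&_&_&_&_&_&_&[_ [c1 [c2 [c3 [c4 _]]]]]) a t ha hat.
  assert (A3 := cw_of_cont _ a _ t c3 ha hat). assert (A4 := cw_of_cont _ a _ t c4 ha hat).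
  split. eapply cw_of_cont; eauto. split. eapply cw_of_cont; eauto.
  split; auto. split; auto. unfold Nv. apply cw_plus; auto.
Qed.

Lemma set_der bh bv muh muv Cvh Chv tau phi x :
  setting bh bv muh muv Cvh Chv tau phi x -> forall t, 0 < t ->
     is_derive (Sh x) t
       (bh - Cvh * (Iv x t / (Sv x t + Iv x t)) * Sh x t - muh * Sh x t) /\
     is_derive (Ih x) t
       (Cvh * (Iv x (t - tau) / (Sv x (t - tau) + Iv x (t - tau))) * Sh x (t - tau)
        - muh * Ih x t) /\
     is_derive (Sv x) t (bv - Chv * Ih x t * Sv x t - muv * Sv x t) /\
     is_derive (Iv x) t (Chv * Ih x t * Sv x t - muv * Iv x t) /\
     is_derive (Nv x) t (bv - muv * Nv x t).
Proof.
  intros (_&_&_&_&_&_&_&_&[_ [_ [_ [_ [_ Hd]]]]]) t ht.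
  destruct (Hd t ht) as [d1 [d2 [d3 d4]]].
  split; [exact d1|split; [exact d2|split; [exact d3|split; [exact d4|]]]].
  unfold Nv. assert (H := is_derive_plus _ _ _ _ _ d3 d4).
  replace (bv - muv * (Sv x t + Iv x t)) with
   (plus (bv - Chv * Ih x t * Sv x t - muv * Sv x t) (Chv * Ih x t * Sv x t - muv * Iv x t))
   by (unfold plus; simpl; ring).
  exact H.
Qed.

Lemma N_lower bh bv muh muv Cvh Chv tau phi x :
  setting bh bv muh muv Cvh Chv tau phi x -> forall t, 0 <= t ->
  Rmin (Nv x 0) (bv / muv) <= Nv x t.
Proof.
  intros H. pose proof H as H'; destruct H' as (_&_&_&hmuv&_).
  apply (cmp_lower_glob 0 (Nv x) bv muv hmuv).
  - intros t ht. destruct (set_cw _ _ _ _ _ _ _ _ _ H 0 t) as [_ [_ [_ [_ ?]]]]; auto.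
    pose proof H as H''; destruct H'' as (_&_&_&_&_&_&?&_). lra.
  - intros t ht. exists (bv - muv * Nv x t). split. apply (set_der _ _ _ _ _ _ _ _ _ H t ht). lra.
Qed.

Lemma N_upper bh bv muh muv Cvh Chv tau phi x :
  setting bh bv muh muv Cvh Chv tau phi x -> forall t, 0 <= t ->
  Nv x t <= bv / muv + Rmax 0 (Nv x 0 - bv / muv).
Proof.
  intros H. pose proof H as H'; destruct H' as (_&_&_&hmuv&_).
  apply (cmp_upper_glob 0 (Nv x) bv muv hmuv).
  - intros t ht. destruct (set_cw _ _ _ _ _ _ _ _ _ H 0 t) as [_ [_ [_ [_ ?]]]]; auto.
    pose proof H as H''; destruct H'' as (_&_&_&_&_&_&?&_). lra.
  - intros t ht. exists (bv - muv * Nv x t). split. apply (set_der _ _ _ _ _ _ _ _ _ H t ht). lra.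
Qed.

Lemma N_pos bh bv muh muv Cvh Chv tau phi x :
  setting bh bv muh muv Cvh Chv tau phi x -> exists m, 0 < m /\ forall t, 0 <= t -> m <= Nv x t.
Proof.
  intros H.
  assert (h0 : 0 < Nv x 0). { pose proof H as H'; destruct H' as (_&_&_&_&_&_&ht&_). apply (set_init _ _ _ _ _ _ _ _ _ H); lra. }
  pose proof H as H'; destruct H' as (hbh&hbv&hmuh&hmuv&_&_&htau&_).
  exists (Rmin (Nv x 0) (bv / muv)). split.
  - apply Rmin_pos; auto. apply Rdiv_lt_0_compat; auto.
  - apply (N_lower _ _ _ _ _ _ _ _ _ H).
Qed.


Lemma abs_bnd p K : Rabs p <= K -> -K <= p <= K.
Proof. unfold Rabs; destruct Rcase_abs; lra. Qed.

Lemma prod_lb p q e K : -e <= p -> -e <= q -> Rabs p <= K -> Rabs q <= K -> 0 <= e ->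
  - (K * e) <= p * q.
Proof.
  intros h1 h2 h3 h4 h5. apply abs_bnd in h3. apply abs_bnd in h4.
  destruct (Rle_dec 0 p).
  - assert (0 <= p * (q + e)) by (apply Rmult_le_pos; lra).
    assert (0 <= (K - p) * e) by (apply Rmult_le_pos; lra). nra.
  - destruct (Rle_dec 0 q).
    + assert (0 <= (p + e) * q) by (apply Rmult_le_pos; lra).
      assert (0 <= (K - q) * e) by (apply Rmult_le_pos; lra). nra.
    + assert (0 <= p * q) by nra. nra.
Qed.

Lemma div_lb v N K m : Rabs v <= K -> 0 < m -> m <= N -> - (K / m) <= v / N.
Proof.
  intros hv hm hN. apply abs_bnd in hv.
  assert (e1 : K / m * m = K) by (field; lra).
  assert (e2 : v / N * N = v) by (field; lra).
  assert (0 <= K / m) by (apply Rmult_le_pos; [lra|left; apply Rinv_0_lt_compat; lra]).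
  nra.
Qed.

Lemma qd_lb v N s P m : - P <= v * s -> 0 <= P -> 0 < m -> m <= N -> - (P / m) <= v / N * s.
Proof.
  intros hv hP hm hN.
  assert (e1 : P / m * m = P) by (field; lra).
  assert (e2 : v / N * s * N = v * s) by (field; lra).
  assert (0 <= P / m) by (apply Rmult_le_pos; [lra|left; apply Rinv_0_lt_compat; lra]).
  nra.
Qed.

Lemma is_derive_pe f s d c l : is_derive f s d ->
  is_derive (fun u => f u + c * exp (l * u)) s (d + c * (l * exp (l * s))).
Proof.
  intros Hf. apply (is_derive_plus f (fun u => c * exp (l * u))); [exact Hf|].
  auto_derive. easy. ring.
Qed.

Lemma positivity bh bv muh muv Cvh Chv tau phi x :
  setting bh bv muh muv Cvh Chv tau phi x -> forall t, 0 <= t ->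
  0 <= Sh x t /\ 0 <= Ih x t /\ 0 <= Sv x t /\ 0 <= Iv x t.
Proof.
  intros H t ht.
  pose proof H as H'; destruct H' as (hbh&hbv&hmuh&hmuv&hCvh&hChv&htau&_).
  assert (CW := set_cw _ _ _ _ _ _ _ _ _ H 0).
  destruct (cw_bounded 0 t (Sh x) (fun u hu => proj1 (CW u ltac:(lra) hu)) ht) as [K1 [hK1 B1]].
  destruct (cw_bounded 0 t (Ih x) (fun u hu => proj1 (proj2 (CW u ltac:(lra) hu))) ht) as [K2 [hK2 B2]].
  destruct (cw_bounded 0 t (Sv x) (fun u hu => proj1 (proj2 (proj2 (CW u ltac:(lra) hu)))) ht) as [K3 [hK3 B3]].
  destruct (cw_bounded 0 t (Iv x) (fun u hu => proj1 (proj2 (proj2 (proj2 (CW u ltac:(lra) hu))))) ht) as [K4 [hK4 B4]].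
  set (K := K1 + K2 + K3 + K4).
  assert (hK : 0 <= K) by (unfold K; lra).
  assert (BB : forall u, 0 <= u <= t -> Rabs (Sh x u) <= K /\ Rabs (Ih x u) <= K /\ Rabs (Sv x u) <= K /\ Rabs (Iv x u) <= K).
  { intros u hu. specialize (B1 u hu). specialize (B2 u hu). specialize (B3 u hu). specialize (B4 u hu).
    unfold K. repeat split; lra. }
  destruct (N_pos _ _ _ _ _ _ _ _ _ H) as [m [hm Hm]].
  set (lam := 1 + Cvh * K / m + Chv * K).
  assert (hKm : 0 <= K / m) by (apply Rmult_le_pos; [lra|left; apply Rinv_0_lt_compat; lra]).
  assert (hlam : 0 < lam) by (unfold lam; unfold Rdiv; rewrite Rmult_assoc; fold (K / m); nra).
  assert (MAIN : forall eps, 0 < eps ->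
     allpos (fun u => Sh x u + eps * exp (lam * u)) (fun u => Ih x u + eps * exp (lam * u))
            (fun u => Sv x u + eps * exp (lam * u)) (fun u => Iv x u + eps * exp (lam * u)) t).
  { intros eps heps.
    assert (CE : forall u, cw 0 (fun u => eps * exp (lam * u)) u) by (intros u; apply cw_cont; reg).
    apply (barrier4 0 t).
    - intros u hu. apply cw_plus. apply (CW u); lra. apply CE.
    - intros u hu. apply cw_plus. apply (CW u); lra. apply CE.
    - intros u hu. apply cw_plus. apply (CW u); lra. apply CE.
    - intros u hu. apply cw_plus. apply (CW u); lra. apply CE.
    - destruct (set_init _ _ _ _ _ _ _ _ _ H 0 ltac:(lra)) as (i1&i2&i3&i4&_).
      unfold allpos. rewrite Rmult_0_r, exp_0. repeat split; lra.
    - intros s hs Hn.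
      set (e := eps * exp (lam * s)).
      assert (he : 0 < e) by (unfold e; apply Rmult_lt_0_compat; [lra|apply exp_pos]).
      assert (Hn' : forall u, 0 <= u <= s -> -e <= Sh x u /\ -e <= Ih x u /\ -e <= Sv x u /\ -e <= Iv x u).
      { intros u hu. destruct (Hn u hu) as (n1&n2&n3&n4). simpl in n1, n2, n3, n4.
        assert (eps * exp (lam * u) <= e).
        { unfold e. apply Rmult_le_compat_l; [lra|]. destruct (Req_dec u s) as [->|]; [lra|].
          left. apply exp_increasing. nra. }
        repeat split; lra. }
      destruct (Hn' s ltac:(lra)) as (s1&s2&s3&s4).
      destruct (BB s ltac:(lra)) as (b1&b2&b3&b4).
      pose proof (Hm s ltac:(lra)) as hNs. unfold Nv in hNs.
      destruct (set_der _ _ _ _ _ _ _ _ _ H s ltac:(lra)) as (d1&d2&d3&d4&_).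
      assert (DL : - (K * e / m) <= Iv x (s - tau) / (Sv x (s - tau) + Iv x (s - tau)) * Sh x (s - tau)).
      { destruct (Rlt_dec (s - tau) 0) as [hneg|hpos].
        - destruct (set_init _ _ _ _ _ _ _ _ _ H (s - tau) ltac:(lra)) as (i1&i2&i3&i4&i5).
          unfold Nv in i5. assert (0 <= Iv x (s - tau) / (Sv x (s - tau) + Iv x (s - tau)))
            by (apply Rmult_le_pos; [lra|left; apply Rinv_0_lt_compat; lra]).
          assert (0 <= K * e / m) by (apply Rmult_le_pos; [nra|left; apply Rinv_0_lt_compat; lra]).
          nra.
        - destruct (Hn' (s - tau) ltac:(lra)) as (t1&t2&t3&t4).
          destruct (BB (s - tau) ltac:(lra)) as (c1&c2&c3&c4).
          pose proof (Hm (s - tau) ltac:(lra)) as hN2. unfold Nv in hN2.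
          apply qd_lb; auto. apply prod_lb; lra. nra. }
      assert (DV : - (K / m) <= Iv x s / (Sv x s + Iv x s)) by (apply div_lb; auto).
      assert (E1 : Cvh * (K * e / m) = (Cvh * K / m) * e) by (field; lra).
      assert (E2 : Cvh * (K / m) * e = (Cvh * K / m) * e) by (field; lra).
      assert (hCKm : 0 <= Cvh * K / m) by (unfold Rdiv; rewrite Rmult_assoc; fold (K / m); nra).
      repeat split; intro Z; simpl in Z; fold e in Z.
      + eexists. split. apply (is_derive_pe _ _ _ eps lam d1). fold e.
        assert (Sh x s = - e) by lra. rewrite H0.
        assert (lam * e = e + Cvh * K / m * e + Chv * K * e) by (unfold lam; ring).
        assert (- (Cvh * (K / m) * e) <= Cvh * (Iv x s / (Sv x s + Iv x s)) * e).
        { assert (Cvh * (- (K / m)) * e <= Cvh * (Iv x s / (Sv x s + Iv x s)) * e).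
          { apply Rmult_le_compat_r; [lra|]. apply Rmult_le_compat_l; lra. }
          lra. }
        assert (0 <= Chv * K * e) by (apply Rmult_le_pos; nra).
        replace (eps * (lam * exp (lam * s))) with (lam * e) by (unfold e; ring).
        nra.
      + eexists. split. apply (is_derive_pe _ _ _ eps lam d2). fold e.
        assert (Ih x s = - e) by lra. rewrite H0.
        replace (eps * (lam * exp (lam * s))) with (lam * e) by (unfold e; ring).
        assert (lam * e = e + Cvh * K / m * e + Chv * K * e) by (unfold lam; ring).
        assert (- (Cvh * (K * e / m)) <= Cvh * (Iv x (s - tau) / (Sv x (s - tau) + Iv x (s - tau))) * Sh x (s - tau)).
        { rewrite Rmult_assoc. assert (Cvh * (- (K * e / m)) <= Cvh * (Iv x (s - tau) / (Sv x (s - tau) + Iv x (s - tau)) * Sh x (s - tau)))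
            by (apply Rmult_le_compat_l; lra). lra. }
        assert (0 <= Chv * K * e) by (apply Rmult_le_pos; nra).
        nra.
      + eexists. split. apply (is_derive_pe _ _ _ eps lam d3). fold e.
        assert (Sv x s = - e) by lra. rewrite H0.
        replace (eps * (lam * exp (lam * s))) with (lam * e) by (unfold e; ring).
        assert (lam * e = e + Cvh * K / m * e + Chv * K * e) by (unfold lam; ring).
        assert (0 <= Cvh * K / m * e) by (apply Rmult_le_pos; nra).
        apply abs_bnd in b2.
        assert (0 <= Chv * e * (Ih x s + K)) by (apply Rmult_le_pos; [nra|lra]).
        assert (- (Chv * K * e) <= Chv * Ih x s * e) by nra.
        nra.
      + eexists. split. apply (is_derive_pe _ _ _ eps lam d4). fold e.
        assert (Iv x s = - e) by lra. rewrite H0.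
        replace (eps * (lam * exp (lam * s))) with (lam * e) by (unfold e; ring).
        assert (lam * e = e + Cvh * K / m * e + Chv * K * e) by (unfold lam; ring).
        assert (0 <= Cvh * K / m * e) by (apply Rmult_le_pos; nra).
        assert (- (K * e) <= Ih x s * Sv x s) by (apply prod_lb; lra).
        nra.
    - lra. }
  assert (LIM : forall f, (forall eps, 0 < eps -> 0 < f t + eps * exp (lam * t)) -> 0 <= f t).
  { intros f Hf. apply Rnot_lt_le. intro hlt.
    set (eps := - f t / (2 * exp (lam * t))).
    assert (hE := exp_pos (lam * t)).
    assert (heps : 0 < eps) by (unfold eps; apply Rdiv_lt_0_compat; lra).
    specialize (Hf eps heps). unfold eps in Hf.
    assert (- f t / (2 * exp (lam * t)) * exp (lam * t) = - f t / 2) by (field; lra). lra. }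
  repeat split; apply LIM; intros eps heps; apply (MAIN eps heps).
Qed.


Lemma der_Sh bh bv muh muv Cvh Chv tau phi x (H : setting bh bv muh muv Cvh Chv tau phi x) t (ht : 0 < t) :
  is_derive (Sh x) t (bh - Cvh * (Iv x t / (Sv x t + Iv x t)) * Sh x t - muh * Sh x t).
Proof. exact (proj1 (set_der _ _ _ _ _ _ _ _ _ H t ht)). Qed.
Lemma der_Ih bh bv muh muv Cvh Chv tau phi x (H : setting bh bv muh muv Cvh Chv tau phi x) t (ht : 0 < t) :
  is_derive (Ih x) t (Cvh * (Iv x (t - tau) / (Sv x (t - tau) + Iv x (t - tau))) * Sh x (t - tau) - muh * Ih x t).
Proof. exact (proj1 (proj2 (set_der _ _ _ _ _ _ _ _ _ H t ht))). Qed.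
Lemma der_Sv bh bv muh muv Cvh Chv tau phi x (H : setting bh bv muh muv Cvh Chv tau phi x) t (ht : 0 < t) :
  is_derive (Sv x) t (bv - Chv * Ih x t * Sv x t - muv * Sv x t).
Proof. exact (proj1 (proj2 (proj2 (set_der _ _ _ _ _ _ _ _ _ H t ht)))). Qed.
Lemma der_Iv bh bv muh muv Cvh Chv tau phi x (H : setting bh bv muh muv Cvh Chv tau phi x) t (ht : 0 < t) :
  is_derive (Iv x) t (Chv * Ih x t * Sv x t - muv * Iv x t).
Proof. exact (proj1 (proj2 (proj2 (proj2 (set_der _ _ _ _ _ _ _ _ _ H t ht))))). Qed.
Lemma der_N bh bv muh muv Cvh Chv tau phi x (H : setting bh bv muh muv Cvh Chv tau phi x) t (ht : 0 < t) :
  is_derive (Nv x) t (bv - muv * Nv x t).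
Proof. exact (proj2 (proj2 (proj2 (proj2 (set_der _ _ _ _ _ _ _ _ _ H t ht))))). Qed.

Lemma pos_all bh bv muh muv Cvh Chv tau phi x :
  setting bh bv muh muv Cvh Chv tau phi x -> forall t, - tau <= t ->
  0 <= Sh x t /\ 0 <= Ih x t /\ 0 <= Sv x t /\ 0 <= Iv x t.
Proof.
  intros H t ht. destruct (Rle_dec 0 t). apply (positivity _ _ _ _ _ _ _ _ _ H); auto.
  destruct (set_init _ _ _ _ _ _ _ _ _ H t ltac:(lra)) as (?&?&?&?&_). auto.
Qed.

Lemma Npos_all bh bv muh muv Cvh Chv tau phi x :
  setting bh bv muh muv Cvh Chv tau phi x -> forall t, - tau <= t -> 0 < Nv x t.
Proof.
  intros H t ht. destruct (Rle_dec 0 t).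
  - destruct (N_pos _ _ _ _ _ _ _ _ _ H) as [m [hm Hm]]. specialize (Hm t r). lra.
  - destruct (set_init _ _ _ _ _ _ _ _ _ H t ltac:(lra)) as (?&?&?&?&?). auto.
Qed.

Lemma ratio_bnd v N u : 0 < N -> v <= u * N -> v / N <= u.
Proof. intros hN h. apply (Rmult_le_reg_r N); auto. unfold Rdiv. rewrite Rmult_assoc, Rinv_l; lra. Qed.

Lemma ratio_nn v N : 0 < N -> 0 <= v -> 0 <= v / N.
Proof. intros. apply Rmult_le_pos; [lra|left; apply Rinv_0_lt_compat; lra]. Qed.

Lemma ev_N bh bv muh muv Cvh Chv tau phi x :
  setting bh bv muh muv Cvh Chv tau phi x -> forall eta, 0 < eta ->
  exists T, forall t, T <= t -> bv / muv - eta <= Nv x t <= bv / muv + eta.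
Proof.
  intros H eta heta. pose proof H as H'; destruct H' as (hbh&hbv&hmuh&hmuv&hCvh&hChv&htau&_).
  assert (C : forall t, 0 <= t -> cw 0 (Nv x) t) by (intros t ht; apply (set_cw _ _ _ _ _ _ _ _ _ H 0 t); lra).
  destruct (ev_upper 0 (Nv x) bv muv hmuv C) with (eta := eta) as [T1 H1]; auto.
  { intros t ht. exists (bv - muv * Nv x t). split; [apply (der_N _ _ _ _ _ _ _ _ _ H t ht)|lra]. }
  destruct (ev_lower 0 (Nv x) bv muv hmuv C) with (eta := eta) as [T2 H2]; auto.
  { intros t ht. exists (bv - muv * Nv x t). split; [apply (der_N _ _ _ _ _ _ _ _ _ H t ht)|lra]. }
  exists (Rmax T1 T2). intros t ht. split. apply H2. pose proof (Rmax_r T1 T2); lra.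
  apply H1. pose proof (Rmax_l T1 T2); lra.
Qed.

Lemma ev_Sh bh bv muh muv Cvh Chv tau phi x :
  setting bh bv muh muv Cvh Chv tau phi x -> forall eta, 0 < eta ->
  exists T, forall t, T <= t -> Sh x t <= bh / muh + eta.
Proof.
  intros H eta heta. pose proof H as H'; destruct H' as (hbh&hbv&hmuh&hmuv&hCvh&hChv&htau&_).
  assert (C : forall t, 0 <= t -> cw 0 (Sh x) t) by (intros t ht; apply (set_cw _ _ _ _ _ _ _ _ _ H 0 t); lra).
  apply (ev_upper 0 (Sh x) bh muh hmuh C); auto.
  intros t ht. eexists. split. apply (der_Sh _ _ _ _ _ _ _ _ _ H t ht).
  destruct (pos_all _ _ _ _ _ _ _ _ _ H t ltac:(lra)) as (p1&p2&p3&p4).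
  assert (hN := Npos_all _ _ _ _ _ _ _ _ _ H t ltac:(lra)). unfold Nv in hN.
  assert (0 <= Iv x t / (Sv x t + Iv x t)) by (apply ratio_nn; lra).
  assert (0 <= Cvh * (Iv x t / (Sv x t + Iv x t)) * Sh x t) by (apply Rmult_le_pos; [nra|lra]).
  lra.
Qed.

Definition Qp (x : traj) (u : R) := exists T, forall t, T <= t -> Iv x t <= u * Nv x t.

Lemma step bh bv muh muv Cvh Chv tau phi x :
  setting bh bv muh muv Cvh Chv tau phi x -> Chv * Cvh * bh <= muh ^ 2 * muv ->
  forall u u', 0 <= u -> u / (1 + u) < u' -> Qp x u -> Qp x u'.
Proof.
  intros H hr u u' hu hu' [T0 HQ].
  pose proof H as H'; destruct H' as (hbh&hbv&hmuh&hmuv&hCvh&hChv&htau&_).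
  set (A := bh / muh). set (V := bv / muv).
  assert (hA : 0 < A) by (apply Rdiv_lt_0_compat; lra).
  assert (hV : 0 < V) by (apply Rdiv_lt_0_compat; lra).
  assert (hu'0 : 0 < u') by (assert (0 <= u / (1 + u)) by (apply ratio_nn; lra); lra).
  set (Psi := fun d => Chv * (Cvh * u * (A + d) / muh + d) * (V + d) / (Chv * (Cvh * u * (A + d) / muh + d) + muv) + d - u' * (V - d)).
  assert (a0nn : 0 <= Chv * (Cvh * u * A / muh)).
  { apply Rmult_le_pos. lra. apply Rmult_le_pos. apply Rmult_le_pos. apply Rmult_le_pos; lra. lra. left; apply Rinv_0_lt_compat; lra. }
  assert (cP : continuity_pt Psi 0).
  { unfold Psi. reg. replace (A + 0) with A by ring. rewrite Rplus_0_r. fold (Cvh * u * A / muh). lra. }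
  assert (P0 : Psi 0 < 0).
  { unfold Psi. rewrite !Rplus_0_r, Rminus_0_r.
    set (a0 := Chv * (Cvh * u * A / muh)). fold a0 in a0nn.
    assert (ha0 : a0 <= u * muv).
    { unfold a0, A. assert (E : Chv * (Cvh * u * (bh / muh) / muh) = u * (Chv * Cvh * bh / muh ^ 2)) by (field; lra).
      rewrite E. apply Rmult_le_compat_l; auto.
      apply (Rmult_le_reg_r (muh ^ 2)). nra. unfold Rdiv. rewrite Rmult_assoc, Rinv_l by nra. lra. }
    assert (F1 : a0 * (1 + u) <= u * (a0 + muv)) by lra.
    assert (F2 : a0 / (a0 + muv) <= u / (1 + u)).
    { apply (Rmult_le_reg_r ((a0 + muv) * (1 + u))). nra.
      replace (a0 / (a0 + muv) * ((a0 + muv) * (1 + u))) with (a0 * (1 + u)) by (field; lra).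
      replace (u / (1 + u) * ((a0 + muv) * (1 + u))) with (u * (a0 + muv)) by (field; lra). lra. }
    replace (a0 * V / (a0 + muv)) with (a0 / (a0 + muv) * V) by (field; lra).
    assert (a0 / (a0 + muv) * V < u' * V) by (apply Rmult_lt_compat_r; lra). lra. }
  destruct (cP (- Psi 0) ltac:(lra)) as [al [hal Hal]].
  set (d := Rmin (al / 2) (V / 2)).
  assert (hd : 0 < d) by (apply Rmin_pos; lra).
  assert (hdV : d <= V / 2) by apply Rmin_r.
  assert (Pd : Psi d < 0).
  { destruct (Req_dec d 0); [lra|].
    assert (HH := Hal d). simpl in HH. unfold R_dist in HH.
    assert (Rabs (d - 0) < al) by (rewrite Rminus_0_r, Rabs_pos_eq by lra; pose proof (Rmin_l (al/2) (V/2)); unfold d; lra).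
    specialize (HH (conj (conj I (not_eq_sym H0)) H1)). apply Rabs_def2 in HH. lra. }
  destruct (ev_Sh _ _ _ _ _ _ _ _ _ H d hd) as [T1 H1].
  destruct (ev_N _ _ _ _ _ _ _ _ _ H d hd) as [T2 H2].
  set (U := Cvh * u * (A + d) / muh + d).
  assert (hU : 0 <= U).
  { unfold U. assert (0 <= Cvh * u * (A + d) / muh) by (apply ratio_nn; [lra|]; apply Rmult_le_pos; nra). lra. }
  set (Ta := Rmax (Rmax T0 T1) 0 + tau).
  assert (hTa0 : 0 <= Ta) by (unfold Ta; pose proof (Rmax_r (Rmax T0 T1) 0); lra).
  destruct (ev_upper Ta (Ih x) (Cvh * u * (A + d)) muh hmuh) with (eta := d) as [T3 H3]; auto.
  { intros t ht. apply (set_cw _ _ _ _ _ _ _ _ _ H Ta t); lra. }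
  { intros t ht. eexists. split. apply (der_Ih _ _ _ _ _ _ _ _ _ H t ltac:(lra)).
    assert (h1 : T0 <= t - tau /\ T1 <= t - tau /\ 0 <= t - tau).
    { unfold Ta in ht. pose proof (Rmax_l (Rmax T0 T1) 0). pose proof (Rmax_r (Rmax T0 T1) 0).
      pose proof (Rmax_l T0 T1). pose proof (Rmax_r T0 T1). lra. }
    destruct h1 as (h1&h2&h3).
    specialize (HQ _ h1). specialize (H1 _ h2).
    destruct (pos_all _ _ _ _ _ _ _ _ _ H (t - tau) ltac:(lra)) as (p1&p2&p3&p4).
    assert (hN := Npos_all _ _ _ _ _ _ _ _ _ H (t - tau) ltac:(lra)). unfold Nv in hN, HQ.
    assert (r1 := ratio_bnd _ _ _ hN HQ). assert (r2 := ratio_nn _ _ hN p4).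
    assert (Iv x (t - tau) / (Sv x (t - tau) + Iv x (t - tau)) * Sh x (t - tau) <= u * (A + d)).
    { apply Rmult_le_compat; auto. }
    assert (Cvh * (Iv x (t - tau) / (Sv x (t - tau) + Iv x (t - tau))) * Sh x (t - tau) <= Cvh * (u * (A + d))).
    { rewrite Rmult_assoc. apply Rmult_le_compat_l; lra. }
    nra. }
  set (Tb := Rmax (Rmax T3 T2) 0).
  assert (hTb0 : 0 <= Tb) by (unfold Tb; apply Rmax_r).
  assert (hk : 0 < Chv * U + muv) by nra.
  destruct (ev_upper Tb (Iv x) (Chv * U * (V + d)) (Chv * U + muv) hk) with (eta := d) as [T4 H4]; auto.
  { intros t ht. apply (set_cw _ _ _ _ _ _ _ _ _ H Tb t); lra. }
  { intros t ht. eexists. split. apply (der_Iv _ _ _ _ _ _ _ _ _ H t ltac:(lra)).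
    assert (h1 : T3 <= t /\ T2 <= t).
    { unfold Tb in ht. pose proof (Rmax_l (Rmax T3 T2) 0). pose proof (Rmax_l T3 T2). pose proof (Rmax_r T3 T2). lra. }
    destruct h1 as [h1 h2]. specialize (H3 t h1). specialize (H2 t h2).
    destruct (pos_all _ _ _ _ _ _ _ _ _ H t ltac:(lra)) as (p1&p2&p3&p4).
    assert (E : Cvh * u * (A + d) / muh + d = U) by reflexivity. rewrite E in H3.
    unfold Nv in H2. fold V in H2.
    assert (Chv * Ih x t * Sv x t <= Chv * U * Sv x t) by (apply Rmult_le_compat_r; [lra|]; apply Rmult_le_compat_l; lra).
    assert (Chv * U * Sv x t <= Chv * U * (V + d - Iv x t)) by (apply Rmult_le_compat_l; [apply Rmult_le_pos; lra|lra]).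
    lra. }
  exists (Rmax T4 T2). intros t ht.
  specialize (H4 t ltac:(pose proof (Rmax_l T4 T2); lra)).
  specialize (H2 t ltac:(pose proof (Rmax_r T4 T2); lra)).
  assert (Ps : Chv * U * (V + d) / (Chv * U + muv) + d <= u' * (V - d)).
  { unfold Psi in Pd. fold U in Pd. lra. }
  fold V in H2.
  assert (u' * (V - d) <= u' * Nv x t) by (apply Rmult_le_compat_l; lra).
  lra.
Qed.


Lemma Qp_mono bh bv muh muv Cvh Chv tau phi x :
  setting bh bv muh muv Cvh Chv tau phi x -> forall u u', u <= u' -> Qp x u -> Qp x u'.
Proof.
  intros H u u' hu [T HT]. exists (Rmax T 0). intros t ht.
  specialize (HT t ltac:(pose proof (Rmax_l T 0); lra)).
  assert (hN := Npos_all _ _ _ _ _ _ _ _ _ H t ltac:(pose proof (Rmax_r T 0); destruct H as (_&_&_&_&_&_&?&_); lra)).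
  assert (u * Nv x t <= u' * Nv x t) by (apply Rmult_le_compat_r; lra). lra.
Qed.

Lemma Q_all bh bv muh muv Cvh Chv tau phi x :
  setting bh bv muh muv Cvh Chv tau phi x -> Chv * Cvh * bh <= muh ^ 2 * muv ->
  forall eta, 0 < eta -> Qp x eta.
Proof.
  intros H hr.
  assert (HQ : forall n, Qp x (2 / (INR n + 2))).
  { induction n.
    - simpl. replace (2 / (0 + 2)) with 1 by field. exists 0. intros t ht.
      destruct (pos_all _ _ _ _ _ _ _ _ _ H t ltac:(destruct H as (_&_&_&_&_&_&?&_); lra)) as (_&_&p3&_).
      unfold Nv. lra.
    - apply (step _ _ _ _ _ _ _ _ _ H hr (2 / (INR n + 2))); auto.
      + pose proof (pos_INR n). apply ratio_nn; lra.
      + rewrite S_INR. pose proof (pos_INR n).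
        replace (2 / (INR n + 2) / (1 + 2 / (INR n + 2))) with (2 / (INR n + 4)) by (field; lra).
        unfold Rdiv. apply Rmult_lt_compat_l. lra. apply Rinv_lt_contravar; nra. }
  intros eta heta. destruct (archimed_cor1 (eta / 2) ltac:(lra)) as [n [hn hn0]].
  apply (Qp_mono _ _ _ _ _ _ _ _ _ H (2 / (INR n + 2))); auto.
  apply lt_0_INR in hn0.
  assert (2 / (INR n + 2) <= 2 / INR n).
  { unfold Rdiv. apply Rmult_le_compat_l. lra. left. apply Rinv_lt_contravar; nra. }
  unfold Rdiv in *. lra.
Qed.

Definition conv (f : R -> R) (l : R) := forall eta, 0 < eta -> exists T, forall t, T <= t -> Rabs (f t - l) <= eta.

Lemma conv_is_lim f l : conv f l -> is_lim f p_infty l.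
Proof.
  intros H P [eps HP]. destruct (H (eps / 2)) as [T HT]. { pose proof (cond_pos eps); lra. }
  exists T. intros t ht. apply HP. specialize (HT t ltac:(lra)).
  unfold ball; simpl; unfold AbsRing_ball, abs, minus, plus, opp; simpl.
  pose proof (cond_pos eps). unfold Rminus in HT. lra.
Qed.

Lemma conv_of_bounds f l : (forall eta, 0 < eta -> exists T, forall t, T <= t -> l - eta <= f t <= l + eta) -> conv f l.
Proof.
  intros H eta heta. destruct (H eta heta) as [T HT]. exists T. intros t ht.
  specialize (HT t ht). apply Rabs_le. lra.
Qed.

Lemma attract bh bv muh muv Cvh Chv tau phi x :
  setting bh bv muh muv Cvh Chv tau phi x -> Chv * Cvh * bh <= muh ^ 2 * muv ->
  is_lim (Sh x) p_infty (bh / muh) /\ is_lim (Ih x) p_infty 0 /\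
  is_lim (Sv x) p_infty (bv / muv) /\ is_lim (Iv x) p_infty 0.
Proof.
  intros H hr.
  pose proof H as H'; destruct H' as (hbh&hbv&hmuh&hmuv&hCvh&hChv&htau&_).
  set (A := bh / muh). set (V := bv / muv).
  assert (hA : 0 < A) by (apply Rdiv_lt_0_compat; lra).
  assert (hV : 0 < V) by (apply Rdiv_lt_0_compat; lra).
  assert (CIv : forall eta, 0 < eta -> exists T, forall t, T <= t -> 0 <= Iv x t <= eta).
  { intros eta heta.
    destruct (Q_all _ _ _ _ _ _ _ _ _ H hr (eta / (V + 1))) as [T1 H1]. { apply Rdiv_lt_0_compat; lra. }
    destruct (ev_N _ _ _ _ _ _ _ _ _ H 1 ltac:(lra)) as [T2 H2].
    exists (Rmax (Rmax T1 T2) 0). intros t ht.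
    pose proof (Rmax_l (Rmax T1 T2) 0). pose proof (Rmax_r (Rmax T1 T2) 0).
    pose proof (Rmax_l T1 T2). pose proof (Rmax_r T1 T2).
    specialize (H1 t ltac:(lra)). specialize (H2 t ltac:(lra)). fold V in H2.
    destruct (pos_all _ _ _ _ _ _ _ _ _ H t ltac:(lra)) as (_&_&_&p4).
    assert (HH : eta / (V + 1) * Nv x t <= eta / (V + 1) * (V + 1)).
    { apply Rmult_le_compat_l. left; apply Rdiv_lt_0_compat; lra. lra. }
    replace (eta / (V + 1) * (V + 1)) with eta in HH by (field; lra). lra. }
  split; [|split; [|split]].
  -
    apply conv_is_lim, conv_of_bounds. intros eta heta.
    destruct (ev_Sh _ _ _ _ _ _ _ _ _ H eta heta) as [T1 H1].
    set (e1 := eta * muh / (2 * Cvh * A)).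
    assert (he1 : 0 < e1).
    { unfold e1. apply Rdiv_lt_0_compat. apply Rmult_lt_0_compat; lra. apply Rmult_lt_0_compat; lra. }
    destruct (Q_all _ _ _ _ _ _ _ _ _ H hr e1 he1) as [T2 H2].
    set (a := Rmax T2 0).
    assert (hk : 0 < muh + Cvh * e1) by nra.
    destruct (ev_lower a (Sh x) bh (muh + Cvh * e1) hk) with (eta := eta / 2) as [T3 H3]; try lra.
    { intros t ht. apply (set_cw _ _ _ _ _ _ _ _ _ H a t); auto. unfold a; pose proof (Rmax_r T2 0); lra. }
    { intros t ht. eexists. split. apply (der_Sh _ _ _ _ _ _ _ _ _ H t). unfold a in ht; pose proof (Rmax_r T2 0); lra.
      unfold a in ht. pose proof (Rmax_r T2 0). pose proof (Rmax_l T2 0).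
      specialize (H2 t ltac:(lra)).
      destruct (pos_all _ _ _ _ _ _ _ _ _ H t ltac:(lra)) as (p1&_&_&p4).
      assert (hN := Npos_all _ _ _ _ _ _ _ _ _ H t ltac:(lra)). unfold Nv in hN, H2.
      assert (r1 := ratio_bnd _ _ _ hN H2).
      assert (Cvh * (Iv x t / (Sv x t + Iv x t)) * Sh x t <= Cvh * e1 * Sh x t).
      { apply Rmult_le_compat_r; auto. apply Rmult_le_compat_l; lra. }
      lra. }
    exists (Rmax T1 T3). intros t ht.
    specialize (H1 t ltac:(pose proof (Rmax_l T1 T3); lra)).
    specialize (H3 t ltac:(pose proof (Rmax_r T1 T3); lra)). fold A in H1.
    split; [|lra].
    set (c := Cvh * e1) in *.
    assert (Ec : A * c / muh = eta / 2) by (unfold c, e1; field; lra).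
    assert (E2 : bh / (muh + c) - (A - A * c / muh) = bh * c ^ 2 / ((muh + c) * muh ^ 2)) by (unfold A; field; lra).
    assert (0 <= bh * c ^ 2 / ((muh + c) * muh ^ 2)).
    { apply Rmult_le_pos. apply Rmult_le_pos. lra. nra. left. apply Rinv_0_lt_compat. apply Rmult_lt_0_compat; nra. }
    lra.
  -
    apply conv_is_lim, conv_of_bounds. intros eta heta.
    set (e1 := eta * muh / (2 * Cvh * (A + 1))).
    assert (he1 : 0 < e1).
    { unfold e1. apply Rdiv_lt_0_compat. apply Rmult_lt_0_compat; lra. apply Rmult_lt_0_compat; lra. }
    destruct (Q_all _ _ _ _ _ _ _ _ _ H hr e1 he1) as [T1 H1].
    destruct (ev_Sh _ _ _ _ _ _ _ _ _ H 1 ltac:(lra)) as [T2 H2].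
    set (a := Rmax (Rmax T1 T2) 0 + tau).
    assert (ha : 0 <= a) by (unfold a; pose proof (Rmax_r (Rmax T1 T2) 0); lra).
    destruct (ev_upper a (Ih x) (Cvh * e1 * (A + 1)) muh hmuh) with (eta := eta / 2) as [T3 H3]; try lra.
    { intros t ht. apply (set_cw _ _ _ _ _ _ _ _ _ H a t); lra. }
    { intros t ht. eexists. split. apply (der_Ih _ _ _ _ _ _ _ _ _ H t ltac:(lra)).
      assert (h1 : T1 <= t - tau /\ T2 <= t - tau /\ 0 <= t - tau).
      { unfold a in ht. pose proof (Rmax_l (Rmax T1 T2) 0). pose proof (Rmax_r (Rmax T1 T2) 0).
        pose proof (Rmax_l T1 T2). pose proof (Rmax_r T1 T2). lra. }
      destruct h1 as (h1&h2&h3).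
      specialize (H1 _ h1). specialize (H2 _ h2). fold A in H2.
      destruct (pos_all _ _ _ _ _ _ _ _ _ H (t - tau) ltac:(lra)) as (p1&p2&p3&p4).
      assert (hN := Npos_all _ _ _ _ _ _ _ _ _ H (t - tau) ltac:(lra)). unfold Nv in hN, H1.
      assert (r1 := ratio_bnd _ _ _ hN H1). assert (r2 := ratio_nn _ _ hN p4).
      assert (Iv x (t - tau) / (Sv x (t - tau) + Iv x (t - tau)) * Sh x (t - tau) <= e1 * (A + 1)).
      { apply Rmult_le_compat; auto. }
      assert (Cvh * (Iv x (t - tau) / (Sv x (t - tau) + Iv x (t - tau))) * Sh x (t - tau) <= Cvh * (e1 * (A + 1))).
      { rewrite Rmult_assoc. apply Rmult_le_compat_l; lra. }
      lra. }
    exists (Rmax T3 0). intros t ht.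
    specialize (H3 t ltac:(pose proof (Rmax_l T3 0); lra)).
    destruct (pos_all _ _ _ _ _ _ _ _ _ H t ltac:(pose proof (Rmax_r T3 0); lra)) as (_&p2&_&_).
    assert (Cvh * e1 * (A + 1) / muh = eta / 2) by (unfold e1; field; lra).
    lra.
  -
    apply conv_is_lim, conv_of_bounds. intros eta heta.
    destruct (CIv (eta / 2) ltac:(lra)) as [T1 H1].
    destruct (ev_N _ _ _ _ _ _ _ _ _ H (eta / 2) ltac:(lra)) as [T2 H2].
    exists (Rmax T1 T2). intros t ht.
    specialize (H1 t ltac:(pose proof (Rmax_l T1 T2); lra)).
    specialize (H2 t ltac:(pose proof (Rmax_r T1 T2); lra)). fold V in H2. unfold Nv in H2. lra.
  - apply conv_is_lim, conv_of_bounds. intros eta heta.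
    destruct (CIv eta heta) as [T1 H1]. exists T1. intros t ht. specialize (H1 t ht). lra.
Qed.


Lemma cw_minus a f g t : cw a f t -> cw a g t -> cw a (fun u => f u - g u) t.
Proof. intros. unfold Rminus. apply cw_plus; auto. apply cw_opp; auto. Qed.

Lemma is_derive_cminus f s d c : is_derive f s d -> is_derive (fun u => c - f u) s (- d).
Proof.
  intros Hf. assert (H := is_derive_comb (fun _ => 0) f s 0 d c (@is_derive_const R_AbsRing R_NormedModule 0 s) Hf).
  replace (- d) with (0 - d) by ring. eapply is_derive_ext; [|exact H]. intros u; simpl; ring.
Qed.

Lemma is_derive_lin2 f g s df dg c : is_derive f s df -> is_derive g s dg ->
  is_derive (fun u => c * f u - g u) s (c * df - dg).
Proof.
  intros Hf Hg. assert (H := is_derive_minus (fun u => c * f u) g s (c * df) dg (is_derive_scal f s c df Hf) Hg).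
  exact H.
Qed.

Lemma Sh_upper bh bv muh muv Cvh Chv tau phi x :
  setting bh bv muh muv Cvh Chv tau phi x -> forall t, 0 <= t ->
  Sh x t <= bh / muh + Rmax 0 (Sh x 0 - bh / muh).
Proof.
  intros H. pose proof H as H'; destruct H' as (hbh&hbv&hmuh&hmuv&hCvh&hChv&htau&_).
  apply (cmp_upper_glob 0 (Sh x) bh muh hmuh).
  - intros t ht. apply (set_cw _ _ _ _ _ _ _ _ _ H 0 t); lra.
  - intros t ht. eexists. split. apply (der_Sh _ _ _ _ _ _ _ _ _ H t ht).
    destruct (pos_all _ _ _ _ _ _ _ _ _ H t ltac:(lra)) as (p1&p2&p3&p4).
    assert (hN := Npos_all _ _ _ _ _ _ _ _ _ H t ltac:(lra)). unfold Nv in hN.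
    assert (0 <= Iv x t / (Sv x t + Iv x t)) by (apply ratio_nn; lra).
    assert (0 <= Cvh * (Iv x t / (Sv x t + Iv x t)) * Sh x t) by (apply Rmult_le_pos; [apply Rmult_le_pos; lra|lra]).
    lra.
Qed.

Lemma box bh bv muh muv Cvh Chv tau phi x b k d :
  setting bh bv muh muv Cvh Chv tau phi x -> 0 < b -> 0 < k -> 0 < d ->
  Chv * (bv / muv + 2 * d) < b * bv -> Cvh * b * (bh / muh + d) < muh ->
  (forall th, - tau <= th <= 0 -> Ih x th < k /\ Iv x th < b * k * Nv x th /\ Sh x th <= bh / muh + d) ->
  (forall t, 0 <= t -> Nv x t < bv / muv + 2 * d /\ Sh x t <= bh / muh + d) ->
  forall t, 0 <= t -> Ih x t < k /\ Iv x t < b * k * Nv x t.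
Proof.
  intros H hb hk hd hb1 hb2 Hin Hup t ht.
  pose proof H as H'; destruct H' as (hbh&hbv&hmuh&hmuv&hCvh&hChv&htau&_).
  set (g1 := fun u => k - Ih x u). set (g2 := fun u => (b * k) * Nv x u - Iv x u).
  assert (C1 : forall u, 0 <= u -> cw 0 g1 u).
  { intros u hu. unfold g1. apply cw_minus. apply cw_const. apply (set_cw _ _ _ _ _ _ _ _ _ H 0 u); lra. }
  assert (C2 : forall u, 0 <= u -> cw 0 g2 u).
  { intros u hu. unfold g2. apply cw_minus. apply cw_scal. apply (set_cw _ _ _ _ _ _ _ _ _ H 0 u); lra.
    apply (set_cw _ _ _ _ _ _ _ _ _ H 0 u); lra. }
  destruct (Hin 0 ltac:(lra)) as (i1&i2&i3).
  assert (B := barrier4 0 t g1 g2 g1 g2 C1 C2 C1 C2).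
  assert (Hst : allpos g1 g2 g1 g2 t).
  { apply B; [ | | split; lra].
    - unfold allpos, g1, g2. repeat split; lra.
    - intros s hs Hn.
      assert (Hn' : forall u, 0 <= u <= s -> Ih x u <= k /\ Iv x u <= b * k * Nv x u).
      { intros u hu. destruct (Hn u hu) as (n1&n2&_). unfold g1, g2 in n1, n2. lra. }
      assert (D1 : dpos g1 s).
      { intros Z. unfold g1 in Z. eexists. split. unfold g1. apply is_derive_cminus.
        apply (der_Ih _ _ _ _ _ _ _ _ _ H s ltac:(lra)).
        remember (s - tau) as u eqn:Hu.
        assert (hy : Iv x u / (Sv x u + Iv x u) <= b * k).
        { assert (hN := Npos_all _ _ _ _ _ _ _ _ _ H u ltac:(lra)). unfold Nv in hN.
          apply ratio_bnd; auto. destruct (Rle_dec 0 u).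
          - destruct (Hn' u ltac:(lra)) as [_ q]. unfold Nv in q. lra.
          - destruct (Hin u ltac:(lra)) as [_ [q _]]. unfold Nv in q. lra. }
        assert (hS : Sh x u <= bh / muh + d).
        { destruct (Rle_dec 0 u). apply (Hup u r). apply (Hin u ltac:(lra)). }
        destruct (pos_all _ _ _ _ _ _ _ _ _ H u ltac:(lra)) as (p1&p2&p3&p4).
        assert (hN := Npos_all _ _ _ _ _ _ _ _ _ H u ltac:(lra)). unfold Nv in hN.
        assert (r2 := ratio_nn _ _ hN p4).
        assert (Iv x u / (Sv x u + Iv x u) * Sh x u <= b * k * (bh / muh + d)) by (apply Rmult_le_compat; auto).
        assert (Cvh * (Iv x u / (Sv x u + Iv x u)) * Sh x u <= Cvh * (b * k * (bh / muh + d))).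
        { rewrite Rmult_assoc. apply Rmult_le_compat_l; lra. }
        assert (Ih x s = k) by lra. rewrite H2.
        assert (Cvh * (b * k * (bh / muh + d)) = k * (Cvh * b * (bh / muh + d))) by ring.
        assert (k * (Cvh * b * (bh / muh + d)) < k * muh) by (apply Rmult_lt_compat_l; lra).
        lra. }
      assert (D2 : dpos g2 s).
      { intros Z. unfold g2 in Z. eexists. split. unfold g2. apply is_derive_lin2.
        apply (der_N _ _ _ _ _ _ _ _ _ H s ltac:(lra)). apply (der_Iv _ _ _ _ _ _ _ _ _ H s ltac:(lra)).
        destruct (pos_all _ _ _ _ _ _ _ _ _ H s ltac:(lra)) as (p1&p2&p3&p4).
        destruct (Hn' s ltac:(lra)) as [q1 _].
        destruct (Hup s ltac:(lra)) as [q2 _]. unfold Nv in q2, Z |- *.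
        assert (Chv * Ih x s * Sv x s <= Chv * k * (bv / muv + 2 * d)).
        { rewrite Rmult_assoc, (Rmult_assoc Chv k). apply Rmult_le_compat_l. lra.
          apply Rmult_le_compat; lra. }
        assert (Chv * k * (bv / muv + 2 * d) < k * (b * bv)).
        { replace (Chv * k * (bv / muv + 2 * d)) with (k * (Chv * (bv / muv + 2 * d))) by ring.
          apply Rmult_lt_compat_l; lra. }
        assert (E0 : muv * (Iv x s - b * k * (Sv x s + Iv x s)) = 0).
        { replace (Iv x s - b * k * (Sv x s + Iv x s)) with 0 by lra. ring. }
        assert (E : b * k * (bv - muv * (Sv x s + Iv x s)) - (Chv * Ih x s * Sv x s - muv * Iv x s)
                    = k * (b * bv) - Chv * Ih x s * Sv x s + muv * (Iv x s - b * k * (Sv x s + Iv x s))) by ring.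
        lra. }
      repeat split; auto. }
  destruct Hst as (z1&z2&_). unfold g1, g2 in z1, z2. split; lra.
Qed.

Lemma Sh_lower bh bv muh muv Cvh Chv tau phi x c :
  setting bh bv muh muv Cvh Chv tau phi x -> 0 <= c -> (forall t, 0 <= t -> Iv x t <= c * Nv x t) ->
  forall t, 0 <= t -> Rmin (Sh x 0) (bh / (muh + Cvh * c)) <= Sh x t.
Proof.
  intros H hc Hy. pose proof H as H'; destruct H' as (hbh&hbv&hmuh&hmuv&hCvh&hChv&htau&_).
  assert (hk : 0 < muh + Cvh * c) by nra.
  apply (cmp_lower_glob 0 (Sh x) bh (muh + Cvh * c) hk).
  - intros t ht. apply (set_cw _ _ _ _ _ _ _ _ _ H 0 t); lra.
  - intros t ht. eexists. split. apply (der_Sh _ _ _ _ _ _ _ _ _ H t ht).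
    destruct (pos_all _ _ _ _ _ _ _ _ _ H t ltac:(lra)) as (p1&p2&p3&p4).
    assert (hN := Npos_all _ _ _ _ _ _ _ _ _ H t ltac:(lra)). unfold Nv in hN.
    specialize (Hy t ltac:(lra)). unfold Nv in Hy.
    assert (r1 := ratio_bnd _ _ _ hN Hy).
    assert (Cvh * (Iv x t / (Sv x t + Iv x t)) * Sh x t <= Cvh * c * Sh x t).
    { apply Rmult_le_compat_r; auto. apply Rmult_le_compat_l; lra. }
    lra.
Qed.

Lemma stable bh bv muh muv Cvh Chv tau :
  0 < bh -> 0 < bv -> 0 < muh -> 0 < muv -> 0 < Cvh -> 0 < Chv -> 0 <= tau ->
  Chv * Cvh * bh < muh ^ 2 * muv ->
  lyap_stable bh bv muh muv Cvh Chv tau (bh / muh) 0 (bv / muv) 0.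
Proof.
  intros hbh hbv hmuh hmuv hCvh hChv htau hr eps heps.
  set (A := bh / muh). set (V := bv / muv).
  assert (hA : 0 < A) by (apply Rdiv_lt_0_compat; lra).
  assert (hV : 0 < V) by (apply Rdiv_lt_0_compat; lra).
  set (X := Chv / muv). set (Y := muh / (Cvh * A)).
  assert (hX : 0 < X) by (apply Rdiv_lt_0_compat; lra).
  assert (hXY : X < Y).
  { assert (E : Y - X = (muh ^ 2 * muv - Chv * Cvh * bh) / (muh * Cvh * A * muv)) by (unfold Y, X, A; field; lra).
    assert (0 < (muh ^ 2 * muv - Chv * Cvh * bh) / (muh * Cvh * A * muv)).
    { apply Rdiv_lt_0_compat. lra. apply Rmult_lt_0_compat; [apply Rmult_lt_0_compat; [apply Rmult_lt_0_compat|]|]; lra. }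
    lra. }
  set (b := (X + Y) / 2).
  assert (hb : 0 < b) by (unfold b; lra).
  set (Z := muh / (Cvh * b)).
  assert (hZ : A < Z).
  { unfold Z. apply (Rmult_lt_reg_r (Cvh * b)). nra.
    replace (muh / (Cvh * b) * (Cvh * b)) with muh by (field; lra).
    assert (b < Y) by (unfold b; lra). unfold Y in H.
    assert (b * (Cvh * A) < muh / (Cvh * A) * (Cvh * A)) by (apply Rmult_lt_compat_r; [nra|lra]).
    replace (muh / (Cvh * A) * (Cvh * A)) with muh in H0 by (field; lra). nra. }
  set (da := (b - X) * bv / (4 * Chv)).
  assert (hda : 0 < da) by (unfold da; apply Rdiv_lt_0_compat; [apply Rmult_lt_0_compat; unfold b; lra|lra]).
  set (db := (Z - A) / 2).
  assert (hdb : 0 < db) by (unfold db; lra).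
  set (k0 := 1 + 2 / (b * V)).
  assert (hk0 : 1 <= k0) by (unfold k0; assert (0 < 2 / (b * V)) by (apply Rdiv_lt_0_compat; nra); lra).
  set (p1 := b * k0 * (3 * V / 2)). set (p2 := A * Cvh * b * k0 / muh).
  assert (hp1 : 0 <= p1) by (unfold p1; apply Rmult_le_pos; [apply Rmult_le_pos|]; lra).
  assert (hp2 : 0 <= p2) by (unfold p2; apply ratio_nn; [lra|]; apply Rmult_le_pos; [apply Rmult_le_pos; [apply Rmult_le_pos|]|]; lra).
  set (M := 3 + k0 + p1 + p2).
  assert (hM : 0 < M) by (unfold M; lra).
  set (d := Rmin (Rmin da db) (Rmin (V / 4) (eps / M))).
  assert (hd : 0 < d) by (unfold d; repeat apply Rmin_pos; try lra; apply Rdiv_lt_0_compat; lra).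
  assert (hdda : d <= da) by (unfold d; pose proof (Rmin_l (Rmin da db) (Rmin (V / 4) (eps / M))); pose proof (Rmin_l da db); lra).
  assert (hddb : d <= db) by (unfold d; pose proof (Rmin_l (Rmin da db) (Rmin (V / 4) (eps / M))); pose proof (Rmin_r da db); lra).
  assert (hdV : d <= V / 4) by (unfold d; pose proof (Rmin_r (Rmin da db) (Rmin (V / 4) (eps / M))); pose proof (Rmin_l (V / 4) (eps / M)); lra).
  assert (hdM : d * M <= eps).
  { assert (d <= eps / M) by (unfold d; pose proof (Rmin_r (Rmin da db) (Rmin (V / 4) (eps / M))); pose proof (Rmin_r (V / 4) (eps / M)); lra).
    apply (Rmult_le_compat_r M) in H; [|lra]. replace (eps / M * M) with eps in H by (field; lra). lra. }
  assert (PC : forall p, 0 <= p -> p + 1 <= M -> d * p < eps).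
  { intros p hp hpM. assert (d * p + d <= d * M) by nra. lra. }
  exists d. split; [exact hd|].
  intros phi x Hphi Hclose Hsol.
  assert (H : setting bh bv muh muv Cvh Chv tau phi x) by (unfold setting; tauto).
  assert (CX : forall th, - tau <= th <= 0 -> close_at x A 0 V 0 d th).
  { intros th hth. destruct Hsol as [He _]. destruct (He th hth) as (e1&e2&e3&e4).
    unfold close_at. rewrite e1, e2, e3, e4. apply Hclose, hth. }
  set (k := d * k0).
  assert (hk : 0 < k) by (unfold k; nra).
  destruct (CX 0 ltac:(lra)) as (c1&c2&c3&c4).
  apply Rabs_def2 in c1, c2, c3, c4. rewrite Rminus_0_r in c2, c4.
  assert (hN0 : V - 2 * d < Nv x 0 < V + 2 * d) by (unfold Nv; lra).
  assert (hNup : forall t, 0 <= t -> Nv x t < V + 2 * d).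
  { intros t ht. pose proof (N_upper _ _ _ _ _ _ _ _ _ H t ht). fold V in H0.
    unfold Rmax in H0; destruct Rle_dec; lra. }
  assert (hNlo : forall t, 0 <= t -> V - 2 * d < Nv x t).
  { intros t ht. pose proof (N_lower _ _ _ _ _ _ _ _ _ H t ht). fold V in H0.
    unfold Rmin in H0; destruct Rle_dec; lra. }
  assert (hShup : forall t, 0 <= t -> Sh x t < A + d).
  { intros t ht. pose proof (Sh_upper _ _ _ _ _ _ _ _ _ H t ht). fold A in H0.
    unfold Rmax in H0; destruct Rle_dec; lra. }
  assert (hb1 : Chv * (bv / muv + 2 * d) < b * bv).
  { fold V. assert (E : b * bv - Chv * V = bv * (b - X)) by (unfold V, X; field; lra).
    assert (2 * d * Chv <= 2 * da * Chv) by nra.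
    assert (E2 : 2 * da * Chv = (b - X) * bv / 2) by (unfold da; field; lra).
    assert (0 < (b - X) * bv) by (apply Rmult_lt_0_compat; unfold b; lra). nra. }
  assert (hb2 : Cvh * b * (bh / muh + d) < muh).
  { fold A. assert (A + d < Z) by (unfold db in hddb; lra).
    assert (Cvh * b * (A + d) < Cvh * b * Z) by (apply Rmult_lt_compat_l; nra).
    unfold Z in H1. replace (Cvh * b * (muh / (Cvh * b))) with muh in H1 by (field; lra). lra. }
  assert (hbkV : d <= b * k * (V / 2)).
  { unfold k, k0. replace (b * (d * (1 + 2 / (b * V))) * (V / 2)) with (d * (b * V / 2 + 1)) by (field; lra).
    assert (0 < b * V / 2) by nra. nra. }
  assert (Hbox := box _ _ _ _ _ _ _ _ _ b k d H hb hk hd hb1 hb2).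
  assert (Hbox' : forall t, 0 <= t -> Ih x t < k /\ Iv x t < b * k * Nv x t).
  { apply Hbox.
    - intros th hth. destruct (CX th hth) as (q1&q2&q3&q4).
      apply Rabs_def2 in q1, q2, q3, q4. rewrite Rminus_0_r in q2, q4.
      fold A. split; [|split].
      + unfold k. nra.
      + assert (V / 2 <= Nv x th) by (unfold Nv; lra).
        assert (b * k * (V / 2) <= b * k * Nv x th) by (apply Rmult_le_compat_l; nra). lra.
      + lra.
    - intros t ht. fold A V. split. apply hNup; auto. left; apply hShup; auto. }
  assert (hbk : 0 <= b * k) by nra.
  assert (hShlo := Sh_lower _ _ _ _ _ _ _ _ _ (b * k) H hbk (fun t ht => Rlt_le _ _ (proj2 (Hbox' t ht)))).
  set (c := Cvh * (b * k)).
  assert (hc : 0 <= c) by (unfold c; nra).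
  assert (Ec : bh / (muh + c) - (A - A * c / muh) = bh * c ^ 2 / ((muh + c) * muh ^ 2)) by (unfold A; field; lra).
  assert (Ec2 : 0 <= bh * c ^ 2 / ((muh + c) * muh ^ 2)).
  { apply Rmult_le_pos. apply Rmult_le_pos. lra. nra. left. apply Rinv_0_lt_compat. apply Rmult_lt_0_compat; nra. }
  assert (Ep2 : A * c / muh = d * p2) by (unfold c, k, p2; field; lra).
  assert (Ep1 : b * k * (3 * V / 2) = d * p1) by (unfold k, p1; ring).
  assert (T2 : d * p2 < eps) by (apply PC; unfold M; lra).
  assert (T1 : d * p1 < eps) by (apply PC; unfold M; lra).
  assert (T0 : d * k0 < eps) by (apply PC; unfold M; lra).
  assert (T3 : 2 * d + d * p1 < eps).
  { assert (d * (2 + p1) < eps) by (apply PC; unfold M; lra). nra. }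
  assert (hde : d < eps) by (assert (d * 1 < eps) by (apply PC; unfold M; lra); lra).
  intros t ht. destruct (Rle_dec 0 t) as [ht0|ht0].
  - destruct (pos_all _ _ _ _ _ _ _ _ _ H t ltac:(lra)) as (q1&q2&q3&q4).
    destruct (Hbox' t ht0) as [b1 b2].
    specialize (hNup t ht0). specialize (hNlo t ht0). specialize (hShup t ht0).
    specialize (hShlo t ht0). fold A in hShlo. fold c in hShlo.
    assert (b * k * Nv x t <= b * k * (3 * V / 2)) by (apply Rmult_le_compat_l; lra).
    unfold close_at. fold A V. rewrite !Rminus_0_r.
    unfold Nv in *.
    split; [|split; [|split]]; apply Rabs_def1.
    + lra.
    + unfold Rmin in hShlo; destruct Rle_dec; lra.
    + unfold k in b1. lra.
    + lra.
    + lra.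
    + lra.
    + lra.
    + lra.
  - destruct (CX t ltac:(lra)) as (q1&q2&q3&q4). unfold close_at. fold A V.
    repeat split; lra.
Qed.


Theorem theorem5 (bh bv muh muv Cvh Chv tau : R)
  (hbh : 0 < bh) (hbv : 0 < bv) (hmuh : 0 < muh) (hmuv : 0 < muv)
  (hCvh : 0 < Cvh) (hChv : 0 < Chv) (htau : 0 <= tau) :
  let R0 := sqrt (Cvh * Chv * bh / (muh ^ 2 * muv)) in
  (R0 < 1 -> glob_asym_stable bh bv muh muv Cvh Chv tau (bh / muh) 0 (bv / muv) 0) /\
  (R0 = 1 -> glob_attractive bh bv muh muv Cvh Chv tau (bh / muh) 0 (bv / muv) 0).
Proof.
  intros R0.
  set (q := Cvh * Chv * bh / (muh ^ 2 * muv)).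
  assert (hden : 0 < muh ^ 2 * muv) by (apply Rmult_lt_0_compat; [apply pow_lt|]; lra).
  assert (hq : 0 <= q) by (unfold q; apply ratio_nn; [lra|]; apply Rmult_le_pos; [apply Rmult_le_pos|]; lra).
  assert (Hsq : sqrt q * sqrt q = q) by (apply sqrt_sqrt; lra).
  assert (Eq : Chv * Cvh * bh = q * (muh ^ 2 * muv)) by (unfold q; field; lra).
  assert (ATT : Chv * Cvh * bh <= muh ^ 2 * muv -> glob_attractive bh bv muh muv Cvh Chv tau (bh / muh) 0 (bv / muv) 0).
  { intros hr phi x Hphi Hsol.
    assert (H : setting bh bv muh muv Cvh Chv tau phi x) by (unfold setting; tauto).
    exact (attract _ _ _ _ _ _ _ _ _ H hr). }
  split.
  - intros hR.
    assert (hq1 : q < 1).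
    { pose proof (sqrt_pos q). unfold R0 in hR. fold q in hR. nra. }
    assert (hr : Chv * Cvh * bh < muh ^ 2 * muv) by nra.
    split. apply stable; auto. apply ATT. lra.
  - intros hR. apply ATT. unfold R0 in hR. fold q in hR. rewrite hR in Hsq. nra.
Qed.
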